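(* Let $X$ be a finite subset of $\mathbb Z$ with at least four elements, let $P$ be a linked pair partition of $X$, and let $p\in P$. Then there exists $q\in P$ with $q\neq p$ such that $P\setminus\{q\}$ is a linked pair partition of $X\setminus q$.
   Context: A pair of a finite set $X$ is a two-element subset; a pair partition of $X$ is a partition of $X$ into pairs. Two distinct pairs $p_1,p_2$ of a pair partition of $X\subset\mathbb Z$ are called linked if $p_1\cap[\min p_2,\max p_2]\neq\emptyset$ and $p_2\cap[\min p_1,\max p_1]\neq\emptyset$. A linked path in $P$ from $p$ to $p'$ is a map $\gamma:\{0,\dots,l\}\to P$ with $\gamma(0)=p$, $\gamma(l)=p'$ and $\gamma(i),\gamma(i+1)$ linked for all $i<l$. $P$ is called linked if for any two elements $p_1,p_2\in P$ there is a linked path in $P$ from $p_1$ to $p_2$. *)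

(* Defs.v *)
From HB Require Import structures.
From mathcomp Require Import all_boot all_order all_algebra.
Set Implicit Arguments. Unset Strict Implicit. Unset Printing Implicit Defensive.
Import Order.TTheory GRing.Theory Num.Theory.

(* Encoding: a finite subset X of Z is a duplicate-free list [X : seq int];
   a pair {a,b} (a <> b) is represented canonically by the ordered pair
   (min, max), i.e. [(a, b) : int * int] with [a < b]; a set of pairs is a
   list of such representatives. *)

Local Open Scope ring_scope.

Definition in_pair (x : int) (p : int * int) : bool := (x == p.1) || (x == p.2).

Definition meets_interval (p1 p2 : int * int) : bool :=
  has (fun x => (p2.1 <= x) && (x <= p2.2)) [:: p1.1; p1.2].

Definition linked_pairs (p1 p2 : int * int) : bool :=
  [&& p1 != p2, meets_interval p1 p2 & meets_interval p2 p1].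

Definition pair_partition (X : seq int) (P : seq (int * int)) : Prop :=
  [/\ all (fun p => p.1 < p.2) P,
      pairwise (fun p q => ~~ in_pair p.1 q && ~~ in_pair p.2 q) P &
      forall x, (x \in X) = has (in_pair x) P].

Definition linked_path (P : seq (int * int)) (p p' : int * int)
    (s : seq (int * int)) : bool :=
  [&& all (mem P) s, path linked_pairs p s & last p s == p'].

Definition linked_partition (P : seq (int * int)) : Prop :=
  forall p1 p2, p1 \in P -> p2 \in P -> exists s, linked_path P p1 p2 s.

Definition remove_pair (X : seq int) (q : int * int) : seq int :=
  [seq x <- X | ~~ in_pair x q].

(* Main.v *)
Require Import Defs.
From mathcomp Require Import all_boot all_order all_algebra.
From mathcomp Require Import zify.
From Stdlib Require Import Classical ClassicalEpsilon.

Lemma linked_sym a b : linked_pairs a b = linked_pairs b a.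
Proof. by rewrite /linked_pairs eq_sym (andbC (meets_interval a b)). Qed.

Lemma lpath_rev P a b s : a \in P -> linked_path P a b s ->
  exists t, linked_path P b a t.
Proof.
elim: s a => [|x s IH] a aP /and3P[/= Hall Hp /eqP Hl].
  by exists [::]; rewrite /linked_path /= -Hl eqxx.
move: Hall Hp => /andP[xP Hall] /andP[Hax Hp].
have : linked_path P x b s by rewrite /linked_path Hall Hp /= Hl eqxx.
case/(IH x xP) => t /and3P[tall tp /eqP tl].
exists (rcons t a); rewrite /linked_path all_rcons rcons_path last_rcons.
rewrite tall tp tl linked_sym Hax eqxx !andbT; exact: aP.
Qed.

Lemma lpath_cat P a b c s t : linked_path P a b s -> linked_path P b c t ->
  linked_path P a c (s ++ t).
Proof.
move=> /and3P[s1 s2 /eqP s3] /and3P[t1 t2 t3].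
by rewrite /linked_path all_cat cat_path last_cat s3 s1 s2 t1 t2 t3.
Qed.

Lemma min_exists (Q : nat -> Prop) n : Q n -> exists m, Q m /\ forall k, Q k -> m <= k.
Proof.
elim/ltn_ind: n => n IH Qn.
case: (classic (exists k, k < n /\ Q k)) => [[k [kn Qk]]|H]; first exact: IH k kn Qk.
exists n; split => // k Qk; rewrite leqNgt; apply/negP => kn; apply: H; by exists k.
Qed.

Definition D P p r n := exists s, linked_path P p r s /\ size s = n.

Lemma dist_ex P p r : exists m, (forall k, D P p r k -> m <= k) /\
   ((exists n, D P p r n) -> D P p r m).
Proof.
case: (classic (exists n, D P p r n)) => [[n Hn]|H].
  have [m [Hm Hmin]] := @min_exists (D P p r) n Hn; by exists m.
by exists 0; split => // k Hk; case: H; exists k.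
Qed.

Definition dist P p r := proj1_sig (constructive_indefinite_description _ (dist_ex P p r)).

Lemma distP P p r : (forall k, D P p r k -> dist P p r <= k) /\
   ((exists n, D P p r n) -> D P p r (dist P p r)).
Proof. by rewrite /dist; case: constructive_indefinite_description. Qed.

Lemma max_exists (T : eqType) (f : T -> nat) (s : seq T) x0 : x0 \in s ->
  exists2 q, q \in s & forall r, r \in s -> f r <= f q.
Proof.
elim: s x0 => // a s IH x0 _.
case: s IH => [|b s] IH.
  by exists a => [|r]; rewrite ?inE ?eqxx // => /eqP->.
have [q qs Hq] := IH b (mem_head _ _).
case: (leqP (f a) (f q)) => H.
  exists q; first by rewrite inE qs orbT.
  by move=> r; rewrite inE => /orP[/eqP->|/Hq].
exists a; first by rewrite mem_head.
move=> r; rewrite inE => /orP[/eqP->//|/Hq] h; exact: (leq_trans h (ltnW H)).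
Qed.

Lemma pw_or (T : eqType) (R : T -> T -> bool) s a b : pairwise R s ->
  a \in s -> b \in s -> a != b -> R a b \/ R b a.
Proof.
elim: s => // c s IH; rewrite pairwise_cons => /andP[Hc Hs].
rewrite !inE => /orP[/eqP Ea|aS] /orP[/eqP Eb|bS] ab.
- by rewrite Ea Eb eqxx in ab.
- by left; rewrite Ea; exact: (allP Hc).
- by right; rewrite Eb; exact: (allP Hc).
- exact: IH.
Qed.

Lemma disj P a b x :
  pairwise (fun p q => ~~ in_pair p.1 q && ~~ in_pair p.2 q) P ->
  a \in P -> b \in P -> a != b -> in_pair x a -> ~~ in_pair x b.
Proof.
move=> Hpw aP bP ab xa.
case: (@pw_or _ _ _ a b Hpw aP bP ab) => /andP[h1 h2].
  by move: xa; rewrite /in_pair => /orP[/eqP->|/eqP->].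
apply/negP; rewrite {1}/in_pair => /orP[/eqP Ex|/eqP Ex]; subst x.
  by rewrite xa in h1.
by rewrite xa in h2.
Qed.

Theorem mainTheorem7 (X : seq int) (P : seq (int * int)) (p : int * int) :
  uniq X -> (4 <= size X)%N ->
  pair_partition X P -> linked_partition P -> p \in P ->
  exists q, [/\ q \in P, q != p,
    pair_partition (remove_pair X q) [seq r <- P | r != q] &
    linked_partition [seq r <- P | r != q]].
Proof.
move=> uX sX [Pall Ppw PX] Plk pP.
have [r0 r0P r0p] : exists2 r0, r0 \in P & r0 != p.
  case: (boolP (has (fun r => r != p) P)) => [/hasP[r rP rp]|]; first by exists r.
  move/hasPn => H; exfalso.
  have : (size X <= size [:: p.1; p.2])%N.
    apply: uniq_leq_size uX _ => x; rewrite PX => /hasP[r rP xr].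
    by have := H r rP; rewrite negbK => /eqP Er; move: xr; rewrite Er /in_pair !inE.
  by move/(leq_trans sX).
pose d := dist P p.
have dP r : r \in P -> (forall k, D P p r k -> d r <= k) /\ D P p r (d r).
  move=> rP; have [h1 h2] := distP P p r; split => //; apply: h2.
  have [s Hs] := Plk p r pP rP; by exists (size s), s.
have [q qP qmax] := @max_exists _ d P p pP.
have dp0 : d p = 0.
  apply/eqP; rewrite -leqn0; apply: (proj1 (dP p pP)).
  by exists [::]; rewrite /linked_path /= eqxx.
have qp : q != p.
  apply/eqP => Eqp.
  have := qmax r0 r0P; rewrite Eqp dp0 leqn0 => /eqP H0.
  have [_ [s [/and3P[_ _ /eqP Hl] Hs]]] := dP r0 r0P.
  rewrite H0 in Hs; move/eqP: Hs; rewrite size_eq0 => /eqP Hs0.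
  by rewrite Hs0 /= in Hl; rewrite Hl eqxx in r0p.
set P' := [seq r <- P | r != q].
have key r : r \in P -> r != q -> exists s, linked_path P' p r s.
  move=> rP rq.
  have [_ [s [Hs Hsz]]] := dP r rP.
  exists s; move: Hs => /and3P[Hall Hpath Hlast].
  rewrite /linked_path Hpath Hlast !andbT.
  apply/allP => y ys; rewrite inE /P' mem_filter.
  move: (allP Hall y ys); rewrite inE => ->; rewrite andbT.
  apply/eqP => Eyq; rewrite Eyq in ys.
  move: Hall Hpath Hlast Hsz; case/splitPr: ys => s1 s2 Hall Hpath Hlast Hsz.
  have Dq : D P p q (size s1).+1.
    exists (rcons s1 q); split; last by rewrite size_rcons.
    move: Hall Hpath; rewrite /linked_path all_cat /= cat_path /= rcons_path last_rcons.
    move=> /and3P[a1 a2 _] /and3P[b1 b2 _].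
    rewrite b1 b2 eqxx all_rcons a1 !andbT; exact: a2.
  have h1 := proj1 (dP q qP) _ Dq.
  have h2 := qmax r rP.
  rewrite size_cat /= in Hsz.
  case: s2 Hall Hpath Hlast Hsz => [|z s2] _ _ Hlast Hsz.
    by move: Hlast; rewrite last_cat /= => /eqP Eqr; rewrite Eqr eqxx in rq.
  rewrite /= in Hsz; move: h1 h2 Hsz; move: (d q) (d r) => a b h1 h2 h3; have := leq_trans h2 h1; rewrite -h3 !addnS !ltnS; by rewrite ltnNge leq_addr.
exists q; split => //.
- split.
  + apply/allP => r; rewrite mem_filter => /andP[_ rP]; exact: (allP Pall) r rP.
  + exact: pairwise_filter.
  + move=> x; rewrite mem_filter PX; apply/idP/idP.
    * move=> /andP[nq /hasP[r rP xr]]; apply/hasP; exists r => //.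
      rewrite mem_filter rP andbT; apply: contraNneq nq => Erq; by rewrite -Erq.
    * move=> /hasP[r]; rewrite mem_filter => /andP[rq rP] xr.
      rewrite (@disj P r q x Ppw rP qP rq xr) /=; apply/hasP; by exists r.
- move=> p1 p2; rewrite !mem_filter => /andP[p1q p1P] /andP[p2q p2P].
  have [s1 H1] := key p1 p1P p1q.
  have [s2 H2] := key p2 p2P p2q.
  have pP' : p \in P' by rewrite mem_filter eq_sym qp pP.
  have [t Ht] := @lpath_rev P' p p1 s1 pP' H1.
  exists (t ++ s2); exact: (@lpath_cat P' p1 p p2 t s2 Ht H2).
Qed.
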